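(* Assume $CA_2$. Then ccc is not productive: there are partial orders $\mathbb P$ and $\mathbb Q$, each satisfying the countable chain condition, such that $\mathbb P\times\mathbb Q$ does not satisfy the countable chain condition.
   Context: A type is a sequence $\tau=\{(m_k,n_{k+1},r_{k+1})\}_{k\in\omega}$ of natural numbers with $m_0=1$; $n_k\ge2$ for $k\ge1$; every $r\in\omega$ equals $r_k$ for infinitely many $k$; $m_k>r_{k+1}$; and $m_{k+1}=r_{k+1}+(m_k-r_{k+1})n_{k+1}$ for all $k$. For a set of ordinals $X$ and $\mathcal F\subseteq[X]^{<\omega}$, $\mathcal F_k$ is the set of elements of rank $k$ in $(\mathcal F,\subsetneq)$; $A\sqsubseteq B$ means $A\subseteq B$ and every element of $B$ below an element of $A$ is in $A$; $A<B$ means every element of $A$ is below every element of $B$. $\mathcal F$ is a construction scheme over $X$ of type $\tau$ if (1) every finite subset of $X$ lies in a member of $\mathcal F$; (2) $|F|=m_k$ for $F\in\mathcal F_k$; (3) $E\cap F\sqsubseteq E,F$ for $E,F\in\mathcal F_k$; (4) each $F\in\mathcal F_{k+1}$ is the union of uniquely determined $F_0,\dots,F_{n_{k+1}-1}\in\mathcal F_k$ forming a $\Delta$-system with root $R(F)$, $|R(F)|=r_{k+1}$, $R(F)<F_0\setminus R(F)<\dots<F_{n_{k+1}-1}\setminus R(F)$. For a construction scheme $\mathcal F$ over $\omega_1$, $l\ge1$, $F\in\mathcal F_l$ and finite $\mathcal C\subseteq[\omega_1]^{<\omega}$: $F$ captures $\mathcal C$ if $|\mathcal C|\le n_l$ and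 $\mathcal C$ can be enumerated as $\{c_i\}_{i<|\mathcal C|}$ with $c_i\subseteq F_i$, $c_i\setminus R(F)\neq\emptyset$ and $\phi_i[c_0]=c_i$ where $\phi_i:F_0\to F_i$ is the increasing bijection. $\mathcal F$ is $n$-capturing if for every uncountable $S\subseteq[\omega_1]^{<\omega}$ and every $k\in\omega$ there are $\mathcal C\in[S]^n$, $l>k$ and $F\in\mathcal F_l$ capturing $\mathcal C$. $CA_n$ is the statement: for every type $\tau$ with $n\le n_k$ for all $k\ge1$ there is an $n$-capturing construction scheme over $\omega_1$ of type $\tau$. *)

(* Defs.v *)
From HB Require Import structures.
From mathcomp Require Import all_boot all_order.
From mathcomp Require Import boolp classical_sets cardinality.

Set Implicit Arguments.
Unset Strict Implicit.
Unset Printing Implicit Defensive.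

Local Open Scope classical_set_scope.
Local Open Scope card_scope.

(* omega_1, given up to isomorphism: a well-founded strict total order  *)
Definition is_omega1 (W : Type) (lt : W -> W -> Prop) : Prop :=
  [/\ (forall x, ~ lt x x),
      (forall x y z, lt x y -> lt y z -> lt x z),
      (forall x y, [\/ lt x y, x = y | lt y x]),
      well_founded lt
    & (~ countable [set: W] /\ forall x, countable [set y | lt y x])].

(* Types tau = {(m_k, n_{k+1}, r_{k+1})}_k ; n 0 and r 0 are unused.   *)
Definition is_type (m n r : nat -> nat) : Prop :=
  [/\ m 0 = 1,
      (forall k, 1 <= k -> 2 <= n k),
      (forall x N, exists k, N < k /\ r k = x),
      (forall k, r k.+1 < m k)
    & (forall k, m k.+1 = r k.+1 + (m k - r k.+1) * n k.+1)].

Section Schemes.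
Variables (W : Type) (lt : W -> W -> Prop).

Definition set_lt (A B : set W) : Prop :=
  forall a b, A a -> B b -> lt a b.

Definition init_seg (A B : set W) : Prop :=
  A `<=` B /\ (forall x y, B x -> A y -> lt x y -> A x).

Fixpoint has_height (Fam : set (set W)) (k : nat) (F : set W) : Prop :=
  match k with
  | 0 => Fam F
  | k'.+1 => Fam F /\ exists E, [/\ Fam E, E `<` F & has_height Fam k' E]
  end.

(* rank of F in the (well-founded, since all members are finite)
   poset (Fam, proper inclusion): length of the longest descending chain *)
Definition rank_is (Fam : set (set W)) (k : nat) (F : set W) : Prop :=
  has_height Fam k F /\ ~ has_height Fam k.+1 F.

Definition level (Fam : set (set W)) (k : nat) : set (set W) :=
  [set F | rank_is Fam k F].

Definition decomp (Fam : set (set W)) (n r : nat -> nat) (l : nat)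
    (F : set W) (Fs : nat -> set W) (R : set W) : Prop :=
  [/\ (forall i, i < n l -> level Fam l.-1 (Fs i)),
      F = \bigcup_(i < n l) Fs i,
      (forall i j, i < j -> j < n l -> Fs i `&` Fs j = R),
      R #= `I_(r l)
    & (set_lt R (Fs 0 `\` R) /\
       forall i, i.+1 < n l -> set_lt (Fs i `\` R) (Fs i.+1 `\` R ))].

Definition construction_scheme (Fam : set (set W)) (m n r : nat -> nat)
    : Prop :=
  [/\ (forall F, Fam F -> finite_set F),
      (forall A, finite_set A -> exists2 F, Fam F & A `<=` F),
      (forall k F, level Fam k F -> F #= `I_(m k)),
      (forall k E F, level Fam k E -> level Fam k F ->
                   init_seg (E `&` F) E /\ init_seg (E `&` F) F)
    & (forall k F, level Fam k.+1 F ->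
                   (exists Fs R, decomp Fam n r k.+1 F Fs R) /\
                   (forall Fs R Gs R', decomp Fam n r k.+1 F Fs R ->
                      decomp Fam n r k.+1 F Gs R' ->
                      forall i, i < n k.+1 -> Fs i = Gs i))].

Definition incr_bij (phi : W -> W) (A B : set W) : Prop :=
  [/\ (forall x, A x -> B (phi x)),
      (forall y, B y -> exists2 x, A x & phi x = y)
    & (forall x y, A x -> A y -> lt x y -> lt (phi x) (phi y))].

Definition captures (Fam : set (set W)) (n r : nat -> nat) (l : nat)
    (F : set W) (C : set (set W)) : Prop :=
  exists p, p <= n l /\
  exists c : nat -> set W,
    [/\ (forall i j, i < p -> j < p -> c i = c j -> i = j),
        C = c @` `I_p
      & exists Fs R, decomp Fam n r l F Fs R /\
          forall i, i < p ->
            [/\ c i `<=` Fs i,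
                c i `\` R !=set0
              & exists2 phi, incr_bij phi (Fs 0) (Fs i) & phi @` c 0 = c i]].

Definition n_capturing (Fam : set (set W)) (n r : nat -> nat) (q : nat)
    : Prop :=
  forall S : set (set W), (forall s, S s -> finite_set s) -> ~ countable S ->
  forall k, exists C : set (set W),
    [/\ C `<=` S, C #= `I_q &
        exists l, k < l /\ exists2 F, level Fam l F & captures Fam n r l F C].

End Schemes.

Definition CA (W : Type) (lt : W -> W -> Prop) (q : nat) : Prop :=
  forall m n r : nat -> nat, is_type m n r ->
    (forall k, 1 <= k -> q <= n k) ->
    exists Fam : set (set W),
      construction_scheme lt Fam m n r /\ n_capturing lt Fam n r q.

Definition partial_order (P : Type) (le : P -> P -> Prop) : Prop :=
  [/\ (forall p, le p p),
      (forall p q, le p q -> le q p -> p = q)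
    & (forall p q s, le p q -> le q s -> le p s)].

Definition compatible (P : Type) (le : P -> P -> Prop) (p q : P) : Prop :=
  exists s, le s p /\ le s q.

Definition antichain (P : Type) (le : P -> P -> Prop) (A : set P) : Prop :=
  forall p q, A p -> A q -> p <> q -> ~ compatible le p q.

Definition ccc (P : Type) (le : P -> P -> Prop) : Prop :=
  forall A : set P, antichain le A -> countable A.

Definition prod_le (P Q : Type) (leP : P -> P -> Prop) (leQ : Q -> Q -> Prop)
    (x y : P * Q) : Prop :=
  leP x.1 y.1 /\ leQ x.2 y.2.

(* Main.v *)
Require Import Defs.
From HB Require Import structures.
From mathcomp Require Import all_boot all_order.
From mathcomp Require Import finmap.
From mathcomp Require Import boolp classical_sets cardinality.
From mathcomp Require Import zify.

Set Implicit Arguments.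
Unset Strict Implicit.
Unset Printing Implicit Defensive.

Local Open Scope classical_set_scope.
Local Open Scope card_scope.

Section Cnt.
Variable T : Type.
Implicit Types A B : set T.

Lemma cnt_sub A B : A `<=` B -> countable B -> countable A.
Proof. by move=> AB; apply: sub_countable; apply: subset_card_le. Qed.

Lemma cnt_U A B : countable A -> countable B -> countable (A `|` B).
Proof.
move=> cA cB.
have -> : A `|` B = \bigcup_(b in [set: bool]) (if b then A else B).
  apply/seteqP; split=> x.
    by case=> ?; [exists true | exists false].
  by case=> -[] _ ?; [left|right].
by apply: bigcup_countable; [exact: countableP | case].
Qed.

Lemma cnt_img (U : Type) (f : T -> U) A : countable A -> countable (f @` A).
Proof. by move=> cA; apply: sub_countable cA; apply: card_image_le. Qed.

Lemma uncnt_img_inj (U : Type) (f : T -> U) A :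
  (forall x y, A x -> A y -> f x = f y -> x = y) ->
  ~ countable A -> ~ countable (f @` A).
Proof.
move=> inj nA cfA; apply: nA.
have := @inj_card_eq _ _ A f; rewrite /= => h.
have e : f @` A #= A by apply: h => x y /set_mem xA /set_mem yA; apply: inj.
by rewrite -(eq_countable e).
Qed.

Lemma uncnt_split A B : ~ countable (A `|` B) -> countable B -> ~ countable A.
Proof. by move=> h cB cA; apply: h; apply: cnt_U. Qed.

End Cnt.

Definition fcard {T : choiceType} (A : set T) := #|` fset_set A|%fset.

Section Card.
Variable T : choiceType.
Implicit Types A B : set T.

Lemma fcard_sub A B : finite_set B -> A `<=` B -> fcard A <= fcard B.
Proof.
move=> fB AB; have fA := sub_finite_set AB fB.
by rewrite /fcard; apply: fsubset_leq_card; rewrite -fset_set_sub.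
Qed.

Lemma fcard_proper A B w : finite_set B -> A `<=` B -> B w -> ~ A w ->
  fcard A < fcard B.
Proof.
move=> fB AB Bw nAw; have fA := sub_finite_set AB fB.
rewrite /fcard; apply: fproper_ltn_card; rewrite fproperEneq.
apply/andP; split; last by rewrite -fset_set_sub.
apply/negP => /eqP e; apply: nAw.
have : w \in fset_set B by rewrite in_fset_set // inE.
by rewrite -e in_fset_set // inE.
Qed.

Lemma fcard_eq_sub A B : finite_set B -> A `<=` B -> fcard B <= fcard A -> A = B.
Proof.
move=> fB AB le; apply/seteqP; split=> // w Bw.
apply: contrapT => nAw.
by have := fcard_proper fB AB Bw nAw; rewrite ltnNge le.
Qed.

Lemma fcard_image (U : choiceType) (f : T -> U) A : finite_set A ->
  (forall x y, A x -> A y -> f x = f y -> x = y) -> fcard (f @` A) = fcard A.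
Proof.
move=> fA inj; rewrite /fcard fset_set_image // card_in_imfset //.
by move=> x y; rewrite !in_fset_set // !inE; apply: inj.
Qed.

Lemma fcard0 A : finite_set A -> fcard A = 0 -> A = set0.
Proof. by move=> fA /cardfs0_eq; apply: fset_set_set0. Qed.

Lemma fcardD1 A a : finite_set A -> A a -> fcard (A `\ a) = (fcard A).-1.
Proof.
move=> fA Aa; rewrite /fcard fset_setD1 // [in RHS](cardfsD1 a).
by rewrite in_fset_set // (mem_set Aa).
Qed.

Lemma fcardD A D : finite_set A -> D `<=` A -> fcard (A `\` D) = fcard A - fcard D.
Proof.
move=> fA DA; have fD := sub_finite_set DA fA.
by rewrite /fcard fset_setD // cardfsDS // -fset_set_sub.
Qed.

End Card.

Section Delta.
Variable T : choiceType.

Definition delta (S : set (set T)) (D : set T) :=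
  forall x y, S x -> S y -> x <> y -> x `&` y = D.

Lemma fcard_set0 : fcard (@set0 T) = 0.
Proof. by rewrite /fcard fset_set0 cardfs0. Qed.

Lemma nonempty_fcard (x : set T) N : fcard x = N.+1 -> exists z, x z.
Proof.
move=> cx; apply: contrapT => nz.
have e : x = set0 by apply/seteqP; split=> z // xz; apply: nz; exists z.
by move: cx; rewrite e fcard_set0.
Qed.

Lemma delta_N N : forall S : set (set T),
  (forall x, S x -> finite_set x /\ fcard x = N) -> ~ countable S ->
  exists S' D, [/\ S' `<=` S, ~ countable S' & delta S' D].
Proof.
elim: N => [|N IH] S hS nS.
  exfalso; apply: nS; apply: (@cnt_sub _ _ [set set0]); last exact: countable1.
  by move=> x Sx; have [fx c0] := hS x Sx; apply: fcard0.
case: (pselect (exists a, ~ countable [set x | S x /\ x a])) => [[a na]|].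
  set Sa := [set x | S x /\ x a] in na.
  have inj : forall x y, Sa x -> Sa y -> x `\ a = y `\ a -> x = y.
    move=> x y [_ xa] [_ ya] e; apply/seteqP; split=> z zin.
      case: (pselect (z = a)) => [->//|za].
      by have : (x `\ a) z by []; rewrite e => -[].
    case: (pselect (z = a)) => [->//|za].
    by have : (y `\ a) z by []; rewrite -e => -[].
  have nS2 := uncnt_img_inj inj na.
  set S2 := (fun x => x `\ a) @` Sa in nS2.
  have hS2 : forall x, S2 x -> finite_set x /\ fcard x = N.
    move=> _ [x [Sx xa] <-]; have [fx cx] := hS x Sx; split.
      exact: finite_setD.
    by rewrite fcardD1 // cx.
  have [S3 [D3 [S3S nS3 dS3]]] := IH S2 hS2 nS2.
  exists [set x | Sa x /\ S3 (x `\ a)], (D3 `|` [set a]); split.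
  - by move=> x [[]].
  - move=> c; apply: nS3.
    apply: (cnt_sub _ (cnt_img (fun x => x `\ a) c)).
    move=> z S3z; have [x Sax ex] := S3S z S3z.
    by exists x => //; split => //; rewrite ex.
  - move=> x y [Sax S3x] [Say S3y] xy.
    have e := dS3 _ _ S3x S3y (fun e => xy (inj _ _ Sax Say e)).
    rewrite -e; apply/seteqP; split=> z.
      move=> [xz yz]; case: (pselect (z = a)) => [->|za]; [by right|left].
      by split; split.
    case=> [[[xz _] [yz _]]|->]; first by split.
    by split; [case: Sax | case: Say].
move=> /forallNP h.
have cS : forall a, countable [set x | S x /\ x a].
  by move=> a; apply: contrapT; apply: h.
pose P := fun M : set (set T) =>
  M `<=` S /\ (forall x y, M x -> M y -> x <> y -> x `&` y = set0).
have [M [[MS Md] Mmax]] : exists A, P A /\ forall B, A `<` B -> ~ P B.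
  apply: Zorn_bigcup => F FP Ftot; split.
    by move=> z [X FX Xz]; have [XS _] := FP X FX; apply: XS.
  move=> x y [X FX Xx] [Y FY Yy] xy.
  case: (Ftot X Y FX FY) => sub.
    by have [_ d] := FP Y FY; apply: d => //; apply: sub.
  by have [_ d] := FP X FX; apply: d => //; apply: sub.
exists M, set0; split=> // cM.
set U := \bigcup_(x in M) x.
have cU : countable U.
  apply: bigcup_countable => // x Mx.
  by apply: finite_set_countable; have [] := hS x (MS x Mx).
set B := \bigcup_(a in U) [set x | S x /\ x a].
have cB : countable B by apply: bigcup_countable.
have [x [Sx nBx]] : exists x, S x /\ ~ B x.
  apply: contrapT => nx; apply: nS; apply: (cnt_sub _ cB) => x Sx.
  by apply: contrapT => nBx; apply: nx; exists x.
have dx : forall m, M m -> x `&` m = set0.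
  move=> m Mm; apply/seteqP; split=> // z [xz mz]; apply: nBx.
  by exists z => //; exists m.
apply: (Mmax (M `|` [set x])).
  split; first by move=> m Mm; left.
  move=> sub; have Mx := sub x (or_intror erefl).
  have [_ cx] := hS x Sx; have [z xz] := nonempty_fcard cx.
  by apply: nBx; exists z => //; exists x.
split.
  by move=> m [/MS //|->].
move=> y z [My|->] [Mz|->] yz.
- exact: Md.
- by rewrite setIC; apply: dx.
- exact: dx.
- by [].
Qed.

Lemma delta_system (S : set (set T)) :
  (forall x, S x -> finite_set x) -> ~ countable S ->
  exists S' D N, [/\ S' `<=` S, ~ countable S',
    (forall x, S' x -> finite_set x /\ fcard x = N) & delta S' D].
Proof.
move=> fS nS.
have [N nSN] : exists N, ~ countable [set x | S x /\ fcard x = N].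
  apply: contrapT => /forallNP h; apply: nS.
  apply: (cnt_sub (B := \bigcup_(N in [set: nat]) [set x | S x /\ fcard x = N])).
    by move=> x Sx; exists (fcard x).
  apply: bigcup_countable; first exact: countableP.
  by move=> N _; apply: contrapT; apply: h.
have [S' [D [S'S nS' dS']]] := @delta_N N [set x | S x /\ fcard x = N]
  (fun x '(conj Sx cx) => conj (fS x Sx) cx) nSN.
exists S', D, N; split => //.
- by move=> x /S'S [].
- by move=> x /S'S [Sx cx]; split => //; apply: fS.
Qed.

End Delta.

Section Scheme.
Variables (T : choiceType) (lt : T -> T -> Prop).
Hypothesis Hirr : forall x, ~ lt x x.
Hypothesis Htr : forall x y z, lt x y -> lt y z -> lt x z.
Hypothesis Htot : forall x y, [\/ lt x y, x = y | lt y x].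
Hypothesis Hwf : well_founded lt.

Lemma lt_asym x y : lt x y -> lt y x -> False.
Proof. by move=> h1 h2; apply: (Hirr (Htr h1 h2)). Qed.

Lemma lt_neq x y : lt x y -> x <> y.
Proof. by move=> h e; rewrite e in h; apply: (Hirr h). Qed.

Lemma iso_unique (L Tt : set T) (f g : T -> T) :
  (forall y, L y -> Tt (f y)) -> (forall y, L y -> Tt (g y)) ->
  (forall x y, L x -> L y -> lt x y -> lt (f x) (f y)) ->
  (forall x y, L x -> L y -> lt x y -> lt (g x) (g y)) ->
  (forall y z, L y -> Tt z -> lt z (f y) -> exists2 y', L y' & f y' = z) ->
  (forall y z, L y -> Tt z -> lt z (g y) -> exists2 y', L y' & g y' = z) ->
  forall y, L y -> f y = g y.
Proof.
have key : forall (f g : T -> T) y,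
  (forall y, L y -> Tt (f y)) ->
  (forall x y, L x -> L y -> lt x y -> lt (f x) (f y)) ->
  (forall x y, L x -> L y -> lt x y -> lt (g x) (g y)) ->
  (forall y z, L y -> Tt z -> lt z (g y) -> exists2 y', L y' & g y' = z) ->
  (forall y', lt y' y -> L y' -> f y' = g y') -> L y ->
  ~ lt (f y) (g y).
  move=> f1 g1 y fT fi gi gs IH Ly lfg.
  have [y' Ly' e] := gs y (f1 y) Ly (fT y Ly) lfg.
  case: (Htot y' y) => [l|e'|l].
  - have := fi _ _ Ly' Ly l; rewrite IH // -e => h; exact: Hirr h.
  - by rewrite e' in e; rewrite e in lfg; apply: (Hirr lfg).
  - by have := gi _ _ Ly Ly' l; rewrite e => h; apply: (lt_asym h lfg).
move=> fT gT fi gi fs gs y; elim/(well_founded_ind Hwf): y => y IH Ly.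
case: (Htot (f y) (g y)) => [l|//|l]; exfalso.
- by apply: (key f g y fT fi gi gs) => // y' l' L'; apply: IH.
- by apply: (key g f y gT gi fi fs) => // y' l' L'; symmetry; apply: IH.
Qed.

Lemma incr_inj (phi : T -> T) (A B : set T) : incr_bij lt phi A B ->
  forall x y, A x -> A y -> phi x = phi y -> x = y.
Proof.
move=> [_ _ inc] x y Ax Ay e; case: (Htot x y) => [l|//|l].
  by have := inc _ _ Ax Ay l; rewrite e => /Hirr.
by have := inc _ _ Ay Ax l; rewrite e => /Hirr.
Qed.

Lemma incr_refl (phi : T -> T) (A B : set T) : incr_bij lt phi A B ->
  forall x y, A x -> A y -> lt (phi x) (phi y) -> lt x y.
Proof.
move=> [_ _ inc] x y Ax Ay l; case: (Htot x y) => [//|e|l'].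
  by rewrite e in l; case: (Hirr l).
by case: (lt_asym l (inc _ _ Ay Ax l')).
Qed.

Variables (Fam : set (set T)) (m n r : nat -> nat).
Hypothesis Hcs : construction_scheme lt Fam m n r.
Hypothesis Hn : forall k, 1 <= k -> 2 <= n k.

Lemma scheme3 k E F : level Fam k E -> level Fam k F ->
  init_seg lt (E `&` F) E /\ init_seg lt (E `&` F) F.
Proof. by case: Hcs => _ _ _ h _; apply: h. Qed.

Lemma scheme4 k F : level Fam k.+1 F -> exists Fs R, decomp lt Fam n r k.+1 F Fs R.
Proof. by case: Hcs => _ _ _ _ h /h []. Qed.

Lemma decomp_facts k F Fs R : decomp lt Fam n r k.+1 F Fs R ->
  [/\ Fs 0 `&` Fs 1 = R, level Fam k (Fs 0), level Fam k (Fs 1),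
      Fs 0 `<=` F /\ Fs 1 `<=` F &
      set_lt lt (Fs 0 `\` R) (Fs 1 `\` R) /\ set_lt lt R (Fs 0 `\` R)].
Proof.
have n2 := Hn (isT : 1 <= k.+1).
case=> lev eF int _ [lR ch]; split.
- by apply: int.
- by apply: lev; apply: leq_trans n2.
- by apply: lev.
- by rewrite eF; split=> z zin; [exists 0 | exists 1] => //=; apply: leq_trans n2.
- by split => //; apply: ch.
Qed.

Lemma R_sub k F Fs R : decomp lt Fam n r k.+1 F Fs R -> R `<=` Fs 0 /\ R `<=` Fs 1.
Proof. by case/decomp_facts => <- *; split=> z []. Qed.

Lemma initL t K E H : t <= K -> level Fam t E -> level Fam K H ->
  init_seg lt (E `&` H) E.
Proof.
elim: K H => [|K IH] H.
  by rewrite leqn0 => /eqP -> lE lH; case: (scheme3 lE lH).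
rewrite leq_eqVlt => /orP[/eqP ->|tK] lE lH; first by case: (scheme3 lE lH).
have [Fs [R dec]] := scheme4 lH.
case: (dec) => lev eF _ _ _.
have IHi : forall i, i < n K.+1 -> init_seg lt (E `&` Fs i) E.
  by move=> i iK; apply: IH => //; apply: lev.
split; first by move=> z [].
move=> x y Ex [Ey Hy] lxy; split=> //.
rewrite eF in Hy *; case: Hy => i iK Fy.
have [_ h] := IHi i iK.
by exists i => //; have [] := h x y Ex (conj Ey Fy) lxy.
Qed.

Lemma fixR k F Fs R phi : decomp lt Fam n r k.+1 F Fs R ->
  incr_bij lt phi (Fs 0) (Fs 1) -> forall z, R z -> phi z = z.
Proof.
move=> dec ib; have [eR l0 l1 _ _] := decomp_facts dec.
have [[_ i0] [_ i1]] := scheme3 l0 l1.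
have ib' := ib; case: ib' => maps onto inc.
apply: (@iso_unique R (Fs 1)).
- by move=> y Ry; apply: maps; rewrite -eR in Ry; case: Ry.
- by move=> y; rewrite -eR => -[].
- by move=> x y Rx Ry; apply: inc; rewrite -eR in Rx Ry; [case: Rx|case: Ry].
- by [].
- move=> y z Ry F1z lzy; have [x F0x ex] := onto z F1z.
  exists x => //; rewrite -eR in Ry *.
  have R0y : Fs 0 y by case: Ry.
  have lxy : lt x y by apply: (incr_refl ib) => //; rewrite ex.
  by have [] := i0 x y F0x Ry lxy.
- move=> y z Ry F1z lzy; exists z => //; rewrite -eR in Ry *.
  by apply: i1 F1z Ry lzy.
Qed.


Definition Kb (b : bool) a c := exists k F Fs R phi,
  [/\ level Fam k.+1 F, decomp lt Fam n r k.+1 F Fs R,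
      (Fs 0 `\` R) a /\ (Fs 1 `\` R) c, incr_bij lt phi (Fs 0) (Fs 1) &
      (if b then lt (phi a) c else lt c (phi a))].

Lemma Kb_lt b a c : Kb b a c -> lt a c.
Proof.
case=> k [F [Fs [R [phi [lF dec [A0 C1] ib _]]]]].
by have [_ _ _ _ [blk _]] := decomp_facts dec; apply: blk.
Qed.

Lemma Kdisj_lev a c k F Fs R k' F' Fs' R' :
  level Fam k.+1 F -> decomp lt Fam n r k.+1 F Fs R ->
  (Fs 0 `\` R) a /\ (Fs 1 `\` R) c ->
  decomp lt Fam n r k'.+1 F' Fs' R' ->
  (Fs' 0 `\` R') a /\ (Fs' 1 `\` R') c -> k < k' -> False.
Proof.
move=> lF dec [[A0 nA] [C1 nC]] dec' [[A0' nA'] [C1' nC']] kk.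
have [eR _ _ [s0 s1] [blk _]] := decomp_facts dec.
have [eR' _ l1' _ [blk' _]] := decomp_facts dec'.
have [_ h] := initL kk lF l1'.
have lac : lt a c by apply: blk; split.
have [_ F1a] := h a c (s0 _ A0) (conj (s1 _ C1) C1') lac.
by apply: nA'; rewrite -eR'; split.
Qed.

Lemma Kdisj a c : Kb true a c -> Kb false a c -> False.
Proof.
move=> [k [F [Fs [R [phi [lF dec [A0 C1] ib l1]]]]]].
move=> [k' [F' [Fs' [R' [phi' [lF' dec' [A0' C1'] ib' l2]]]]]].
case: (ltngtP k k') => [kk|kk|ekk].
- exact: (Kdisj_lev lF dec (conj A0 C1) dec' (conj A0' C1') kk).
- exact: (Kdisj_lev lF' dec' (conj A0' C1') dec (conj A0 C1) kk).
subst k'.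
have [eR l0 l1' _ _] := decomp_facts dec.
have [eR' l0' l1'' _ _] := decomp_facts dec'.
have [[_ i00] [_ i00']] := scheme3 l0 l0'.
have [[_ i11] [_ i11']] := scheme3 l1' l1''.
case: A0 => F0a _; case: A0' => F0a' _; case: C1 => F1c _; case: C1' => F1c' _.
have ib0 := ib; have ib0' := ib'.
case: ib0 => maps onto inc; case: ib0' => maps' onto' inc'.
pose L := [set y | Fs 0 y /\ (y = a \/ lt y a)].
have LF0' : forall y, L y -> Fs' 0 y.
  move=> y [F0y [->//|lya]].
  by have [] := i00 y a F0y (conj F0a F0a') lya.
have ltLa : forall y x, L y -> lt x y -> lt x a.
  by move=> y x [_ [->//|lya]] lxy; apply: Htr lya.
have fle : forall y, L y -> lt (phi y) c.
  move=> y [F0y [->//|lya]]; apply: Htr l1.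
  exact: inc.
have e : phi a = phi' a.
  apply: (@iso_unique L (Fs' 1)) => //.
  - move=> y Ly; have F1 : Fs 1 (phi y) by apply: maps; case: Ly.
    by have [] := i11 (phi y) c F1 (conj F1c F1c') (fle y Ly).
  - by move=> y /LF0' /maps'.
  - by move=> x y [Fx _] [Fy _]; apply: inc.
  - by move=> x y /LF0' Fx /LF0' Fy; apply: inc'.
  - move=> y z Ly F1'z lzy.
    have [F1z _] := i11' z c F1'z (conj F1c F1c') (Htr lzy (fle y Ly)).
    have [x F0x ex] := onto z F1z; exists x => //; split=> //; right.
    apply: (ltLa y) => //; apply: (incr_refl ib) => //; first by case: Ly.
    by rewrite ex.
  - move=> y z Ly F1'z lzy.
    have [x F0'x ex] := onto' z F1'z; exists x => //.
    have lxy : lt x y by apply: (incr_refl ib') => //; [apply: LF0'|rewrite ex].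
    have lxa := ltLa y x Ly lxy.
    have [F0x _] := i00' x a F0'x (conj F0a F0a') lxa.
    by split=> //; right.
  - by split=> //; left.
by rewrite /= e in l1; apply: (lt_asym l1 l2).
Qed.

Hypothesis Hcap : n_capturing lt Fam n r 2.

Lemma cap (S : set (set T)) : (forall s, S s -> finite_set s) -> ~ countable S ->
  exists c0 c1 k F Fs R phi,
  [/\ S c0 /\ S c1, c0 <> c1,
      level Fam k.+1 F /\ decomp lt Fam n r k.+1 F Fs R,
      (c0 `<=` Fs 0 /\ c1 `<=` Fs 1) /\ (c0 `\` R !=set0 /\ c1 `\` R !=set0) &
      incr_bij lt phi (Fs 0) (Fs 1) /\ phi @` c0 = c1].
Proof.
move=> fS nS.
have [C [CS C2 [l [lk [F lF [p [pn [c [cinj eC [Fs [R [dec hc]]]]]]]]]]]] :=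
  Hcap fS nS 0.
have ep : p = 2.
  apply/card_eq_II; apply: card_eq_trans C2.
  rewrite eC; apply: card_esym; apply: inj_card_eq.
  by move=> i j /set_mem /= ip /set_mem /= jp; apply: cinj.
subst p.
case: l lk lF dec hc pn => [//|k] _ lF dec hc _.
have [s0 n0 _] := hc 0 isT.
have [s1 n1 [phi ib e]] := hc 1 isT.
exists (c 0), (c 1), k, F, Fs, R, phi; split => //.
- by split; apply: CS; rewrite eC; [exists 0 | exists 1].
- by move=> /cinj -/(_ isT isT).
Qed.

Definition Qrel (x x' : set T) :=
  (forall a b, x a -> x' b -> ~ x b -> lt a b) /\ (x' `\` x !=set0).

Lemma capQ k F Fs R phi c0 c1 : decomp lt Fam n r k.+1 F Fs R ->
  c0 `<=` Fs 0 -> c1 `<=` Fs 1 -> c0 `\` R !=set0 -> c1 `\` R !=set0 ->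
  incr_bij lt phi (Fs 0) (Fs 1) -> phi @` c0 = c1 -> Qrel c0 c1.
Proof.
move=> dec s0 s1 [e [c0e nRe]] [w [c1w nRw]] ib ec.
have [eR _ _ _ [blk lR]] := decomp_facts dec.
have [R0 R1] := R_sub dec.
have fx := fixR dec ib.
split.
  move=> a b c0a c1b nc0b.
  have nRb : ~ R b.
    move=> Rb; apply: nc0b.
    have : c1 b by [].
    rewrite -ec => -[a0 c0a0 ea0].
    have := incr_inj ib (s0 _ c0a0) (R0 _ Rb); rewrite ea0 fx // => h.
    by rewrite -h.
  case: (pselect (R a)) => Ra.
    apply: (Htr (lR _ _ Ra (conj (s0 _ c0e) nRe))).
    exact: (blk _ _ (conj (s0 _ c0e) nRe) (conj (s1 _ c1b) nRb)).
  exact: (blk _ _ (conj (s0 _ c0a) Ra) (conj (s1 _ c1b) nRb)).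
exists w; split => // c0w; apply: nRw; rewrite -eR.
by split; [exact: s0 _ c0w | exact: s1 _ c1w].
Qed.

Lemma hom_union (K : T -> T -> Prop) (p q : set T) :
  (forall a c, p a -> ~ q a -> q c -> ~ p c -> lt a c /\ K a c) ->
  (forall a c, p a -> p c -> lt a c -> K a c) ->
  (forall a c, q a -> q c -> lt a c -> K a c) ->
  forall a c, (p `|` q) a -> (p `|` q) c -> lt a c -> K a c.
Proof.
move=> cross hp hq a c [pa|qa] [pc|qc] lac.
- exact: hp.
- case: (pselect (q a)) => qa; first exact: hq.
  case: (pselect (p c)) => pc; first exact: hp.
  by have [] := cross a c pa qa qc pc.
- case: (pselect (p a)) => pa; first exact: hp.
  case: (pselect (q c)) => qc; first exact: hq.
  by have [l _] := cross c a pc qc qa pa; case: (lt_asym l lac).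
- exact: hq.
Qed.

Lemma split_map (Phi : T -> T) (Dom D A0 B0 A1 B1 : set T) :
  (forall x y, Dom x -> Dom y -> lt x y -> lt (Phi x) (Phi y)) ->
  (forall x y, Dom x -> Dom y -> Phi x = Phi y -> x = y) ->
  D `|` A0 `|` B0 `<=` Dom ->
  (forall z, D z -> Phi z = z) ->
  Phi @` (D `|` A0 `|` B0) = D `|` A1 `|` B1 ->
  (forall z, D z -> ~ A0 z /\ ~ B0 z /\ ~ A1 z /\ ~ B1 z) ->
  (forall z, A0 z -> ~ B0 z) -> (forall z, A1 z -> ~ B1 z) ->
  set_lt lt A0 B0 -> set_lt lt A1 B1 ->
  finite_set A0 -> finite_set A1 -> fcard A0 = fcard A1 ->
  Phi @` A0 = A1 /\ Phi @` B0 = B1.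
Proof.
move=> inc inj sDom fixD eim disD dis0 dis1 lt0 lt1 fA0 fA1 cA.
have DomA0 : A0 `<=` Dom by move=> z z0; apply: sDom; left; right.
have DomB0 : B0 `<=` Dom by move=> z z0; apply: sDom; right.
have DomD : D `<=` Dom by move=> z z0; apply: sDom; left; left.
have f12 : forall a, (A0 `|` B0) a -> A1 (Phi a) \/ B1 (Phi a).
  move=> a ab.
  have : (D `|` A1 `|` B1) (Phi a).
    by rewrite -eim; exists a => //; case: ab => h; [left; right|right].
  case=> [[Dp|A1p]|B1p]; [|by left|by right].
  have e : a = Phi a.
    apply: inj; first by case: ab => h; [apply: DomA0|apply: DomB0].
      exact: DomD.
    by rewrite (fixD _ Dp).
  have Da : D a by rewrite e.
  by have [h1 [h2 _]] := disD a Da; case: ab.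
have f3 : forall z, (A1 `|` B1) z -> (Phi @` A0) z \/ (Phi @` B0) z.
  move=> z ab.
  have : (D `|` A1 `|` B1) z by case: ab => h; [left; right|right].
  rewrite -eim => -[w [[Dw|A0w]|B0w] ez].
  - have Dz : D z by rewrite -ez (fixD _ Dw).
    by have [_ [_ [h3 h4]]] := disD z Dz; case: ab.
  - by left; exists w.
  - by right; exists w.
have A1sub : A1 `<=` Phi @` A0.
  move=> w A1w; apply: contrapT => nw.
  have [//|[b B0b ewb]] := f3 w (or_introl A1w).
  have sub : Phi @` A0 `<=` A1.
    move=> _ [a A0a <-]; case: (f12 a (or_introl A0a)) => // B1z.
    have l1 : lt (Phi a) (Phi b) by apply: inc; [apply: DomA0|apply: DomB0|apply: lt0].
    by rewrite ewb in l1; case: (lt_asym l1 (lt1 _ _ A1w B1z)).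
  have := fcard_proper fA1 sub A1w nw.
  rewrite fcard_image // ?cA ?ltnn //.
  by move=> x y hx hy; apply: inj; apply: DomA0.
have eA : Phi @` A0 = A1.
  symmetry; apply: fcard_eq_sub => //; first exact: finite_image.
  rewrite fcard_image // ?cA //.
  by move=> x y hx hy; apply: inj; apply: DomA0.
split => //; apply/seteqP; split.
  move=> _ [b B0b <-]; case: (f12 b (or_intror B0b)) => // A1z.
  rewrite -eA in A1z; case: A1z => a A0a e.
  have ab : a = b by apply: inj => //; [apply: DomA0|apply: DomB0].
  by rewrite ab in A0a; case: (dis0 _ A0a).
move=> z B1z; case: (f3 z (or_intror B1z)) => // A0z.
by rewrite eA in A0z; case: (dis1 _ A0z).
Qed.

Lemma delta_sub (S : set (set T)) D : ~ countable S -> delta S D ->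
  forall x, S x -> D `<=` x.
Proof.
move=> nS dS x Sx.
have [y Sy yx] : exists2 y, S y & y <> x.
  apply: contrapT => h; apply: nS; apply: (@cnt_sub _ _ [set x]) (countable1 x).
  move=> y Sy; apply: contrapT => nyx; apply: h; exists y => //.
by rewrite -(dS x y Sx Sy (nesym yx)) => z [].
Qed.

Lemma img_DA (Phi : T -> T) (D x y : set T) :
  (forall z, D z -> Phi z = z) -> D `<=` x -> D `<=` y ->
  Phi @` (x `\` D) = y `\` D -> Phi @` x = y.
Proof.
move=> fixD Dx Dy e; apply/seteqP; split.
  move=> _ [w xw <-]; case: (pselect (D w)) => Dw.
    by rewrite fixD //; apply: Dy.
  have : (y `\` D) (Phi w) by rewrite -e; exists w.
  by case.
move=> z yz; case: (pselect (D z)) => Dz.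
  by exists z; [apply: Dx | apply: fixD].
have : (Phi @` (x `\` D)) z by rewrite e.
by case=> w [xw _] <-; exists w.
Qed.

Lemma eqDU (D x y : set T) : D `<=` x ->
  D `|` (x `\` D) `|` (y `\` D) = x `|` y.
Proof.
move=> Dx; apply/seteqP; split.
  by move=> z [[/Dx|[]]|[]] h; [left|left|right].
move=> z [xz|yz]; case: (pselect (D z)) => Dz.
- by left; left.
- by left; right.
- by left; left.
- by right.
Qed.

Lemma double_capture (S : set (set T)) D N :
  (forall x, S x -> finite_set x /\ fcard x = N) -> ~ countable S -> delta S D ->
  exists x x' y y' k F Fs R Phi,
  [/\ [/\ S x, S x', S y & S y'],
      [/\ x <> y, x' <> y', x <> x', y <> y' & x <> y' /\ x' <> y],
      Qrel x x',
      [/\ level Fam k.+1 F, decomp lt Fam n r k.+1 F Fs R,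
          incr_bij lt Phi (Fs 0) (Fs 1) & x `|` x' `<=` Fs 0] &
      Phi @` x = y /\ Phi @` x' = y'].
Proof.
move=> hS nS dS.
have Dsub := delta_sub nS dS.
have Dint : forall x y, S x -> S y -> x <> y -> forall z, x z -> y z -> D z.
  by move=> x y Sx Sy xy z xz yz; rewrite -(dS x y Sx Sy xy).
pose Sd := [set x | S x /\ exists x', [/\ S x', x' <> x & Qrel x x']].
have nSd : ~ countable Sd.
  have cSd' : countable (S `\` Sd).
    apply: contrapT => nc.
    have fS' : forall s, (S `\` Sd) s -> finite_set s.
      by move=> s [Ss _]; case: (hS s Ss).
    have [c0 [c1 [k [F [Fs [R [phi [[S0 S1] n01 [lF dec]
      [[s0 s1] [ne0 ne1]] [ib ec]]]]]]]]] := cap fS' nc.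
    case: S0 => S0 nSd0; apply: nSd0; split => //; exists c1; split.
    - by case: S1.
    - by apply: nesym.
    - exact: capQ dec s0 s1 ne0 ne1 ib ec.
  move=> cSd; apply: nS; apply: (cnt_sub _ (cnt_U cSd cSd')) => x Sx.
  by case: (pselect (Sd x)) => h; [left|right].
have ex : forall x, exists u, Sd x -> [/\ S u, u <> x & Qrel x u].
  move=> x; case: (pselect (Sd x)) => [[Sx [x' [Sx' nx' Q]]]|nx].
    by exists x'.
  by exists set0.
have [pi hpi] := choice ex.
pose V := (fun x => x `|` pi x) @` Sd.
have fV : forall u, V u -> finite_set u.
  move=> _ [x Sdx <-]; have [pS _ _] := hpi x Sdx.
  by rewrite finite_setU; split; [exact: (hS x Sdx.1).1 | exact: (hS _ pS).1].
have nV : ~ countable V.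
  move=> cV; apply: nSd.
  apply: (@cnt_sub _ _ (\bigcup_(u in V) [set z | z `<=` u /\ finite_set z])).
    move=> x Sdx; exists (x `|` pi x); first by exists x.
    by split; [move=> z xz; left | exact: (hS x Sdx.1).1].
  apply: bigcup_countable => // u Vu.
  by apply: countable_finite_subset; apply: finite_set_countable; apply: fV.
have [u0 [u1 [k [F [Fs [R [Phi [[V0 V1] n01 [lF dec]
  [[s0 s1] [ne0 ne1]] [ib ec]]]]]]]]] := cap fV nV.
case: V0 => x0 Sdx0 eu0; case: V1 => x1 Sdx1 eu1.
have [pS0 pn0 Q0] := hpi x0 Sdx0.
have [pS1 pn1 Q1] := hpi x1 Sdx1.
have Sx0 := Sdx0.1; have Sx1 := Sdx1.1.
move: eu0 eu1 => /= eu0 eu1.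
rewrite -eu0 -eu1 in s0 s1 ne0 ne1 ec n01; clear eu0 eu1.
have [eR l0 l1 _ [blk lR]] := decomp_facts dec.
have [R0 R1] := R_sub dec.
have fx := fixR dec ib.
have ib' := ib; case: ib' => maps onto inc.
have inj := incr_inj ib.
have [[_ i0] _] := scheme3 l0 l1.
have DR : D `<=` R.
  move=> z Dz; rewrite -eR; split.
    by apply: s0; left; apply: (Dsub x0).
  by apply: s1; left; apply: (Dsub x1).
have piR : pi x0 `<=` R -> False.
  move=> sub; have [w [pw nxw]] := Q0.2.
  case: ne0 => z [[x0z|pz] nRz].
    apply: nRz; have Rw := sub w pw; rewrite -eR in Rw *.
    apply: (i0 z w) => //; first by apply: s0; left.
    exact: Q0.1.
  exact: nRz (sub z pz).
have n_x0x1 : x0 <> x1 by move=> e; apply: n01; rewrite e.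
have n_p0p1 : pi x0 <> pi x1.
  move=> e; apply: piR => z pz; rewrite -eR; split.
    by apply: s0; right.
  by apply: s1; right; rewrite -e.
have n_p0x1 : pi x0 <> x1.
  move=> e; apply: piR => z pz; rewrite -eR; split.
    by apply: s0; right.
  by apply: s1; left; rewrite -e.
have [eA eB] : Phi @` (x0 `\` D) = x1 `\` D /\ Phi @` (pi x0 `\` D) = pi x1 `\` D.
  apply: (@split_map Phi (Fs 0) D) => //.
  - by move=> z; rewrite eqDU; [apply: s0 | apply: Dsub].
  - by move=> z Dz; apply: fx; apply: DR.
  - by rewrite !eqDU //; apply: Dsub.
  - by move=> z Dz; do !split; move=> [].
  - by move=> z [x0z nD] [pz _]; apply: nD; apply: (Dint x0 (pi x0)) => //; apply: nesym.
  - by move=> z [x1z nD] [pz _]; apply: nD; apply: (Dint x1 (pi x1)) => //; apply: nesym.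
  - move=> a b [x0a _] [pb nDb]; apply: Q0.1 => // x0b; apply: nDb.
    by apply: (Dint x0 (pi x0)) => //; apply: nesym.
  - move=> a b [x1a _] [pb nDb]; apply: Q1.1 => // x1b; apply: nDb.
    by apply: (Dint x1 (pi x1)) => //; apply: nesym.
  - by apply: finite_setD; case: (hS x0 Sx0).
  - by apply: finite_setD; case: (hS x1 Sx1).
  - have [f0 c0] := hS x0 Sx0; have [f1 c1] := hS x1 Sx1.
    by rewrite !fcardD ?c0 ?c1 //; apply: Dsub.
have fixD : forall z, D z -> Phi z = z by move=> z Dz; apply: fx; apply: DR.
have ex0 : Phi @` x0 = x1 by apply: img_DA eA => //; apply: Dsub.
have ep0 : Phi @` pi x0 = pi x1 by apply: img_DA eB => //; apply: Dsub.
have n_x0p1 : x0 <> pi x1.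
  move=> e; apply: piR => z pz.
  have F0z : Fs 0 z by apply: s0; right.
  have x0p : x0 (Phi z) by rewrite e -ep0; exists z.
  have F0p : Fs 0 (Phi z) by apply: s0; left.
  have Rp : R (Phi z) by rewrite -eR; split => //; apply: maps.
  have := fx _ Rp => h.
  by have -> : z = Phi z by apply: inj => //; rewrite h.
exists x0, (pi x0), x1, (pi x1), k, F, Fs, R, Phi; split.
- by split.
- by split => //; apply: nesym.
- exact: Q0.
- by split.
- by split.
Qed.

Definition homb b (z : set T) := forall a c, z a -> z c -> lt a c -> Kb b a c.

Lemma ccc_core b (S0 : set (set T)) :
  (forall x, S0 x -> finite_set x /\ homb b x) -> ~ countable S0 ->
  exists p q, [/\ S0 p, S0 q, p <> q & homb b (p `|` q)].
Proof.
move=> h nS0.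
have [S [D [N [SS0 nS hS dS]]]] := delta_system (fun x Sx => (h x Sx).1) nS0.
have Dsub := delta_sub nS dS.
have Dint : forall x y, S x -> S y -> x <> y -> forall z, x z -> y z -> D z.
  by move=> x y Sx Sy xy z xz yz; rewrite -(dS x y Sx Sy xy).
have [x [x' [y [y' [k [F [Fs [R [Phi [[Sx Sx' Sy Sy']
  [nxy nx'y' nxx' nyy' [nxy' nx'y]] Q [lF dec ib sub] [ey ey']]]]]]]]]]] :=
  double_capture hS nS dS.
have [eR l0 l1 _ [blk lR]] := decomp_facts dec.
have [R0 R1] := R_sub dec.
have fx := fixR dec ib.
have ib' := ib; case: ib' => maps onto inc.
have inj := incr_inj ib.
have hom : forall z, S z -> homb b z := fun z Sz => (h z (SS0 z Sz)).2.
case: b h hom => h hom.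
- exists x, y'; split; [exact: SS0 | exact: SS0 | exact: nxy' |].
  apply: hom_union; [|exact: hom x Sx|exact: hom y' Sy'].
  move=> a c xa ny'a y'c nxc.
  have y'c' := y'c; rewrite -ey' in y'c'; case: y'c' => be x'be ebe.
  have nxbe : ~ x be.
    move=> xbe; apply: nxc; apply: (Dsub x Sx).
    by apply: (Dint y y' Sy Sy' nyy') => //; rewrite -ey -ebe; exists be.
  have labe := Q.1 a be xa x'be nxbe.
  have F0a : Fs 0 a by apply: sub; left.
  have F0be : Fs 0 be by apply: sub; right.
  have nRc : ~ R c.
    move=> Rc; have e1 := fx c Rc.
    have ebc : be = c by apply: inj => //; [exact: R0 | rewrite ebe e1].
    apply: nxc; apply: (Dsub x Sx); apply: (Dint x' y' Sx' Sy' nx'y') => //.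
    by rewrite -ebc.
  have nRa : ~ R a.
    move=> Ra; apply: ny'a; apply: (Dsub y' Sy').
    by apply: (Dint x y Sx Sy nxy) => //; rewrite -ey; exists a => //; apply: fx.
  have F1c : Fs 1 c by rewrite -ebe; apply: maps.
  split; first exact: blk.
  exists k, F, Fs, R, Phi; split; [exact: lF | exact: dec | by split | exact: ib |].
  by rewrite /= -ebe; apply: inc.
- exists x', y; split; [exact: SS0 | exact: SS0 | exact: nx'y |].
  apply: hom_union; [|exact: hom x' Sx'|exact: hom y Sy].
  move=> a c x'a nya yc nx'c.
  have yc' := yc; rewrite -ey in yc'; case: yc' => al xal eal.
  have nxa : ~ x a.
    move=> xa; apply: nya; apply: (Dsub y Sy).
    exact: (Dint x x' Sx Sx' nxx').
  have lala := Q.1 al a xal x'a nxa.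
  have F0a : Fs 0 a by apply: sub; right.
  have F0al : Fs 0 al by apply: sub; left.
  have nRc : ~ R c.
    move=> Rc; have e1 := fx c Rc.
    have ec : al = c by apply: inj => //; [exact: R0 | rewrite eal e1].
    apply: nx'c; apply: (Dsub x' Sx'); apply: (Dint x y Sx Sy nxy) => //.
    by rewrite -ec.
  have nRa : ~ R a.
    move=> Ra; apply: nya; apply: (Dsub y Sy).
    by apply: (Dint x' y' Sx' Sy' nx'y') => //; rewrite -ey'; exists a => //; apply: fx.
  have F1c : Fs 1 c by rewrite -eal; apply: maps.
  split; first exact: blk.
  exists k, F, Fs, R, Phi; split; [exact: lF | exact: dec | by split | exact: ib |].
  by rewrite /= -eal; apply: inc.
Qed.

Definition PT b := {z : set T | finite_set z /\ homb b z}.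
Definition PL b (p q : PT b) := proj1_sig q `<=` proj1_sig p.

Lemma PT_inj b (p q : PT b) : proj1_sig p = proj1_sig q -> p = q.
Proof.
case: p q => [p hp] [q hq] /= e; subst q.
by rewrite (Prop_irrelevance hp hq).
Qed.

Lemma PL_po b : partial_order (@PL b).
Proof.
split.
- by move=> p.
- move=> p q pq qp; apply: PT_inj; apply/seteqP; split; [exact: qp|exact: pq].
- by move=> p q s pq qs; rewrite /PL => z /qs /pq.
Qed.

Lemma PL_ccc b : ccc (@PL b).
Proof.
move=> A anti; apply: contrapT => nA.
pose S0 := (fun p : PT b => proj1_sig p) @` A.
have nS0 : ~ countable S0.
  by apply: uncnt_img_inj => // p q _ _; apply: PT_inj.
have hS0 : forall x, S0 x -> finite_set x /\ homb b x.
  by move=> _ [p _ <-]; exact: (proj2_sig p).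
have [_ [_ [[p Ap <-] [q Aq <-] npq hom]]] := ccc_core hS0 nS0.
have fU : finite_set (proj1_sig p `|` proj1_sig q).
  by rewrite finite_setU; split; [case: (proj2_sig p) | case: (proj2_sig q)].
pose s : PT b := exist _ _ (conj fU hom).
apply: (anti p q Ap Aq); first by move=> e; apply: npq; rewrite e.
by exists s; split => z zin /=; [left|right].
Qed.

Definition sing b (a : T) : PT b.
Proof.
exists [set a]; split; first exact: finite_set1.
by move=> x y -> -> l; case: (Hirr l).
Defined.

Lemma prod_not_ccc : ~ countable [set: T] -> ~ ccc (prod_le (@PL true) (@PL false)).
Proof.
move=> nT hccc.
pose f := fun a : T => (sing true a, sing false a).
have fa : forall a, proj1_sig (f a).1 = [set a] by [].
have anti : antichain (prod_le (@PL true) (@PL false)) (f @` [set: T]).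
  move=> _ _ [a _ <-] [c _ <-] nac [s [[sa1 sa2] [sc1 sc2]]].
  have ac : a <> c by move=> e; apply: nac; rewrite e.
  have hs1 := (proj2_sig s.1).2; have hs2 := (proj2_sig s.2).2.
  have s1a : proj1_sig s.1 a by apply: sa1.
  have s1c : proj1_sig s.1 c by apply: sc1.
  have s2a : proj1_sig s.2 a by apply: sa2.
  have s2c : proj1_sig s.2 c by apply: sc2.
  case: (Htot a c) => [l|//|l].
    exact: (Kdisj (hs1 _ _ s1a s1c l) (hs2 _ _ s2a s2c l)).
  exact: (Kdisj (hs1 _ _ s1c s1a l) (hs2 _ _ s2c s2a l)).
have := hccc _ anti.
apply: uncnt_img_inj => // a c _ _ e.
have : proj1_sig (f a).1 c by rewrite e /=.
by [].
Qed.

Lemma final : ~ countable [set: T] ->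
  exists (P : Type) (leP : P -> P -> Prop) (Q : Type) (leQ : Q -> Q -> Prop),
    [/\ partial_order leP, partial_order leQ, ccc leP, ccc leQ
      & ~ ccc (prod_le leP leQ)].
Proof.
move=> nT; exists (PT true), (@PL true), (PT false), (@PL false); split.
- exact: PL_po.
- exact: PL_po.
- exact: PL_ccc.
- exact: PL_ccc.
- exact: prod_not_ccc.
Qed.
End Scheme.
Definition tn (k : nat) : nat := 2.
Definition tr (k : nat) : nat := if k is k'.+1 then logn 2 k else 0.
Fixpoint tm (k : nat) : nat :=
  if k is k'.+1 then tr k + (tm k' - tr k) * tn k else 1.

Lemma tr_le k : tr k.+1 <= k.
Proof. by rewrite /tr -ltnS; apply: ltn_logl. Qed.

Lemma tm_ge k : k < tm k.
Proof.
elim: k => [//|k IH].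
have h := tr_le k; change (k.+1 < tr k.+1 + (tm k - tr k.+1) * 2).
move: h IH; generalize (tr k.+1) (tm k); lia.
Qed.

Lemma is_type_t : is_type tm tn tr.
Proof.
split=> //.
- move=> x N; exists (2 ^ x * N.*2.+1); split.
    have : 0 < 2 ^ x by rewrite expn_gt0.
    move=> h; apply: (leq_trans _ (leq_pmull _ h)); rewrite -addnn; lia.
  rewrite /tr; case E: (2 ^ x * N.*2.+1) => [|k].
    have : 0 < 2 ^ x * N.*2.+1 by rewrite muln_gt0 expn_gt0.
    by rewrite E.
  rewrite -E mulnC logn_Gauss ?pfactorK // coprime2n /=.
  by rewrite odd_double.
- move=> k; have := tr_le k; have := tm_ge k; lia.
Qed.

Lemma main_choice (W : choiceType) (lt : W -> W -> Prop) :
  is_omega1 lt -> CA lt 2 ->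
  exists (P : Type) (leP : P -> P -> Prop) (Q : Type) (leQ : Q -> Q -> Prop),
    [/\ partial_order leP, partial_order leQ, ccc leP, ccc leQ
      & ~ ccc (prod_le leP leQ)].
Proof.
case=> irr htr tot wf [nW _] hCA.
have [Fam [Hcs Hcap]] := hCA tm tn tr is_type_t (fun k _ => leqnn 2).
apply: (final irr htr tot wf Hcs _ Hcap nW).
by move=> k _; rewrite /tn.
Qed.

Theorem mainTheorem12 (W : Type) (lt : W -> W -> Prop) :
  is_omega1 lt -> CA lt 2 ->
  exists (P : Type) (leP : P -> P -> Prop) (Q : Type) (leQ : Q -> Q -> Prop),
    [/\ partial_order leP, partial_order leQ, ccc leP, ccc leQ
      & ~ ccc (prod_le leP leQ)].
Proof.
move: lt; elim/Pchoice: W => W lt; exact: main_choice.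
Qed.
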